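(* Let $\lambda_1,\dots,\lambda_n$ be ordinals with $\operatorname{cf}(\lambda_i)\neq\omega$ for all $i$, and put $X=\lambda_1\times\cdots\times\lambda_n$ (product of order topologies). For every finite partition $\mathcal A$ of $X$ into clopen sets there are finite subsets $F_i\subseteq\lambda_i$ ($i=1,\dots,n$) such that the grid partition $\mathcal G^X_{\{F_i\}_{i=1}^n}$ is a refinement of $\mathcal A$.
   Context: For an ordinal $\lambda$ and a finite subset $F=\{x_1<\cdots<x_N\}\subseteq\lambda$, the grid partition of $\lambda$ with respect to $F$ is $\mathcal G^\lambda_F=\{[0,x_1]\}\cup\{[x_j+1,x_{j+1}]\mid j=1,\dots,N-1\}\cup\{[x_N+1,\cdot)\}$, where $[\alpha,\beta]=\{x\in\lambda\mid\alpha\leq x\leq\beta\}$ and $[\alpha,\cdot)=\{x\in\lambda\mid\alpha\leq x\}$ (for $F=\emptyset$ it is $\{\lambda\}$). For finite $F_i\subseteq\lambda_i$, the grid partition of $X$ is $\mathcal G^X_{\{F_i\}}=\{\prod_{i=1}^nU_i\mid U_i\in\mathcal G^{\lambda_i}_{F_i}\}$. A family $\mathcal G$ refines $\mathcal A$ if every member of $\mathcal G$ is contained in some member of $\mathcal A$. *)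

(* Defs.v *)
From Stdlib Require List.
From mathcomp Require Import all_boot.
Set Implicit Arguments.
Unset Strict Implicit.
Unset Printing Implicit Defensive.

(* An ordinal is represented (up to order isomorphism) by a well-ordered type. *)
Record ordinal_wo := OrdWO {
  wo_carrier :> Type;
  wo_lt : wo_carrier -> wo_carrier -> Prop;
  wo_lt_irrefl : forall x, ~ wo_lt x x;
  wo_lt_trans : forall x y z, wo_lt x y -> wo_lt y z -> wo_lt x z;
  wo_lt_total : forall x y, wo_lt x y \/ x = y \/ wo_lt y x;
  wo_lt_wf : well_founded wo_lt
}.

Definition wo_le (L : ordinal_wo) (x y : L) : Prop := wo_lt x y \/ x = y.

Definition cf_omega (L : ordinal_wo) : Prop :=
  exists s : nat -> L,
    (forall m, wo_lt (s m) (s m.+1)) /\ (forall x : L, exists m, wo_le x (s m)).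

(* Order topology: basic open sets are open intervals (l, u) with
   optional endpoints (None = unbounded). *)
Definition in_interval (L : ordinal_wo) (l u : option L) (x : L) : Prop :=
  (match l with None => True | Some a => wo_lt a x end) /\
  (match u with None => True | Some b => wo_lt x b end).

Definition prodX (n : nat) (L : 'I_n -> ordinal_wo) := forall i : 'I_n, L i.

Definition prod_open (n : nat) (L : 'I_n -> ordinal_wo) (U : prodX L -> Prop) : Prop :=
  forall x, U x -> exists (l u : forall i : 'I_n, option (L i)),
    (forall i, in_interval (l i) (u i) (x i)) /\
    (forall y : prodX L, (forall i, in_interval (l i) (u i) (y i)) -> U y).

Definition prod_closed (n : nat) (L : 'I_n -> ordinal_wo) (U : prodX L -> Prop) : Prop :=
  prod_open (fun x => ~ U x).

Definition prod_clopen (n : nat) (L : 'I_n -> ordinal_wo) (U : prodX L -> Prop) : Prop :=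
  prod_open U /\ prod_closed U.

Definition clopen_partition (n : nat) (L : 'I_n -> ordinal_wo) (k : nat)
    (A : 'I_k -> (prodX L -> Prop)) : Prop :=
  (forall j, prod_clopen (A j)) /\
  (forall j, exists x, A j x) /\
  (forall j j' x, j <> j' -> A j x -> A j' x -> False) /\
  (forall x, exists j, A j x).

(* U is a member of the grid partition G^L_F of L w.r.t. the finite set F
   (given as a list), with F = {x_1 < ... < x_N}:
   [0, x_1], [x_j + 1, x_{j+1}] = {x | x_j < x <= x_{j+1}}, [x_N + 1, .);
   for F empty, the whole of L. *)
Definition grid_block (L : ordinal_wo) (F : list L) (U : L -> Prop) : Prop :=
  (F = nil /\ forall x, U x <-> True) \/
  (exists a, List.In a F /\ (forall c, List.In c F -> wo_le a c) /\
     forall x, U x <-> wo_le x a) \/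
  (exists a b, List.In a F /\ List.In b F /\ wo_lt a b /\
     (forall c, List.In c F -> ~ (wo_lt a c /\ wo_lt c b)) /\
     forall x, U x <-> (wo_lt a x /\ wo_le x b)) \/
  (exists a, List.In a F /\ (forall c, List.In c F -> wo_le c a) /\
     forall x, U x <-> wo_lt a x).

Definition grid_refines (n : nat) (L : 'I_n -> ordinal_wo)
    (F : forall i : 'I_n, list (L i)) (k : nat) (A : 'I_k -> (prodX L -> Prop)) : Prop :=
  forall U : forall i : 'I_n, L i -> Prop,
    (forall i, grid_block (F i) (U i)) ->
    (exists x : prodX L, forall i, U i (x i)) ->
    exists j, forall x : prodX L, (forall i, U i (x i)) -> A j x.

(* Main.v *)
Require Import Defs.
From mathcomp Require Import all_boot.
From Stdlib Require Import Classical ClassicalEpsilon FunctionalExtensionality.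

Set Implicit Arguments.
Unset Strict Implicit.
Unset Printing Implicit Defensive.

Lemma choice_nd (X Y : Type) (R : X -> Y -> Prop) :
  (forall a, exists b, R a b) -> exists f : X -> Y, forall a, R a (f a).
Proof.
move=> H; exists (fun a => proj1_sig (constructive_indefinite_description _ (H a))).
move=> a; exact: proj2_sig (constructive_indefinite_description _ (H a)).
Qed.

Lemma choice_dep (X : Type) (B : X -> Type) (R : forall a, B a -> Prop) :
  (forall a, exists b, R a b) -> exists f : forall a, B a, forall a, R a (f a).
Proof.
move=> H; exists (fun a => proj1_sig (constructive_indefinite_description _ (H a))).
move=> a; exact: proj2_sig (constructive_indefinite_description _ (H a)).
Qed.

Section Order.
Variable L : ordinal_wo.
Implicit Types x y z : L.

Lemma le_refl x : wo_le x x. Proof. by right. Qed.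
Lemma lt_trans x y z : wo_lt x y -> wo_lt y z -> wo_lt x z.
Proof. exact: wo_lt_trans. Qed.
Lemma lt_le_trans x y z : wo_lt x y -> wo_le y z -> wo_lt x z.
Proof. by move=> h [h'|<-] //; apply: lt_trans h h'. Qed.
Lemma le_lt_trans x y z : wo_le x y -> wo_lt y z -> wo_lt x z.
Proof. by move=> [h'|->] h //; apply: lt_trans h' h. Qed.
Lemma le_trans x y z : wo_le x y -> wo_le y z -> wo_le x z.
Proof. move=> [h|->] //; by move=> h'; left; apply: lt_le_trans h h'. Qed.
Lemma not_lt_le x y : ~ wo_lt x y -> wo_le y x.
Proof.
move=> h; case: (wo_lt_total x y) => [//|[->|h']]; [exact: le_refl|by left].
Qed.
Lemma le_lt_False x y : wo_le x y -> wo_lt y x -> False.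
Proof. move=> h h'; exact: (wo_lt_irrefl (le_lt_trans h h')). Qed.

Lemma wo_min (P : L -> Prop) : (exists x, P x) ->
  exists x, P x /\ forall y, P y -> wo_le x y.
Proof.
move=> [x0 hx0]; apply: NNPP => hn.
suff: forall x, ~ P x by move/(_ x0).
apply: (well_founded_ind (@wo_lt_wf L)) => x IH hx.
apply: hn; exists x; split => // y hy; apply: not_lt_le => hyx.
exact: IH y hyx hy.
Qed.

Definition imm x y := wo_lt x y /\ forall w, ~ (wo_lt x w /\ wo_lt w y).

Definition ndecr (w : nat -> L) := forall m, wo_le (w m) (w m.+1).

Lemma ndecr_le w : ndecr w -> forall m m', m <= m' -> wo_le (w m) (w m').
Proof.
move=> hw m m' /subnKC <-; elim: (m' - m) => [|d IH]; first by rewrite addn0; exact: le_refl.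
rewrite addnS; exact: le_trans IH (hw _).
Qed.

Definition conv (w : nat -> L) (z : L) := forall l u, in_interval l u z ->
  exists M, forall m, M <= m -> in_interval l u (w m).

Lemma records (y : nat -> L) N :
  exists m, N <= m /\ forall m', m <= m' -> wo_le (y m) (y m').
Proof.
have [v [[m [Nm <-]] Hmin]] := @wo_min (fun v => exists m, N <= m /\ y m = v)
  (ex_intro _ (y N) (ex_intro _ N (conj (leqnn N) erefl))).
exists m; split => // m' Hm'; apply: Hmin; exists m'; split => //.
exact: leq_trans Nm Hm'.
Qed.

End Order.

Definition sincr (f : nat -> nat) := forall m, f m < f m.+1.

Lemma sincr_lt f : sincr f -> forall m m', m < m' -> f m < f m'.
Proof.
move=> hf m m' /subnKC <-; elim: (m' - m.+1) => [|d IH]; first by rewrite addn0.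
rewrite addnS; exact: ltn_trans IH (hf _).
Qed.

Lemma sincr_ge f : sincr f -> forall m, m <= f m.
Proof. move=> hf; elim => // m IH; exact: leq_ltn_trans IH (hf m). Qed.

Lemma sincr_comp f g : sincr f -> sincr g -> sincr (fun m => f (g m)).
Proof. move=> hf hg m /=; exact: sincr_lt hf _ _ (hg m). Qed.

Section Seq.
Variable L : ordinal_wo.

Lemma mono_sub (y : nat -> L) : exists phi, sincr phi /\ ndecr (fun m => y (phi m)).
Proof.
have [r hr] := choice_nd (records y).
pose phi := fix phi k := if k is k'.+1 then r (phi k').+1 else r 0.
exists phi; split.
- move=> m /=; exact: (hr _).1.
- move=> m /=.
  have h : forall k, exists N, phi k = r N by case => [|k]; eexists.
  have [N e] := h m; rewrite e; apply: (hr N).2.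
  exact: leq_trans (leqnSn _) (hr _).1.
Qed.

Lemma conv_sub (w : nat -> L) z f : conv w z -> sincr f -> conv (fun m => w (f m)) z.
Proof.
move=> hc hf l u hi; have [M hM] := hc l u hi; exists M => m hm.
apply: hM; exact: leq_trans hm (sincr_ge hf m).
Qed.

Hypothesis hL : ~ cf_omega L.

Lemma bounded (w : nat -> L) : ndecr w -> exists b, forall m, wo_le (w m) b.
Proof.
move=> hw; apply: NNPP => hnb.
have hg : forall b : L, exists m, wo_lt b (w m).
  move=> b; apply: NNPP => h; apply: hnb; exists b => m; apply: not_lt_le => hl.
  by apply: h; exists m.
have [g hg'] := choice_nd hg.
pose idx := fix idx k := if k is k'.+1 then maxn (idx k').+1 (g (w (idx k'))) else 0.
have hidx : forall m, m <= idx m.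
  elim => // m IH /=; rewrite leq_max; apply/orP; left; by rewrite ltnS.
apply: hL; exists (fun k => w (idx k)); split.
- move=> m /=; apply: (lt_le_trans (hg' _)); apply: ndecr_le => //; exact: leq_maxr.
- move=> x; exists (g x); left.
  apply: (lt_le_trans (hg' x)); exact: ndecr_le.
Qed.

Lemma seq_conv (y : nat -> L) : exists phi, sincr phi /\ exists z, conv (fun m => y (phi m)) z.
Proof.
have [phi [hphi hnd]] := mono_sub y.
have [b hb] := bounded hnd.
have [z [hz hzmin]] := @wo_min L (fun z => forall m, wo_le (y (phi m)) z) (ex_intro _ b hb).
exists phi; split => //; exists z => l u [hl hu].
have hup : forall m, match u with None => True | Some d => wo_lt (y (phi m)) d end.
  case: u hu => //= d hd m; exact: le_lt_trans (hz m) hd.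
case: l hl => [a|] /= hl.
- have [m0 hm0] : exists m0, wo_lt a (y (phi m0)).
    apply: NNPP => h; have: wo_le z a.
      apply: hzmin => m; apply: not_lt_le => hlt; apply: h; by exists m.
    move=> hza; exact: le_lt_False hza hl.
  exists m0 => m hm; split; [exact: lt_le_trans hm0 (ndecr_le hnd hm) | by case: u hu hup => //= d _; apply].
- by exists 0 => m _; split => //; case: u hu hup => //= d _; apply.
Qed.

End Seq.

Lemma grid_lemma (L : ordinal_wo) (F : list L) U s t :
  grid_block F U -> U s -> U t -> forall c, wo_le s c -> wo_lt c t -> ~ List.In c F.
Proof.
case=> [[-> _]|[[a [ha [hmin hU]]]|[[a [b [ha [hb [hab [hbet hU]]]]]]|[a [ha [hmax hU]]]]]]
  hs ht c hsc hct hc //.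
- have h1 := hmin c hc; have h2 := (hU t).1 ht.
  exact: le_lt_False h1 (lt_le_trans hct h2).
- have [h1 h2] := (hU s).1 hs; have [h3 h4] := (hU t).1 ht.
  apply: (hbet c hc); split; first exact: lt_le_trans h1 hsc.
  exact: lt_le_trans hct h4.
- have h1 := hmax c hc; have h2 := (hU s).1 hs.
  exact: le_lt_False h1 (lt_le_trans h2 hsc).
Qed.

Section Main.
Variable n : nat.
Variable L : 'I_n -> ordinal_wo.
Hypothesis hcf : forall i, ~ cf_omega (L i).
Variable k : nat.
Variable A : 'I_k -> (prodX L -> Prop).
Hypothesis hA : clopen_partition A.

Definition upd (x : prodX L) (i : 'I_n) (v : L i) : prodX L :=
  fun j => match i =P j with ReflectT e => ecast k (L k) e v | ReflectF _ => x j end.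
Arguments upd x i v _ : clear implicits.

Lemma upd_eq x i v : upd x i v i = v.
Proof. rewrite /upd; case: eqP => // e; by rewrite (eq_axiomK e). Qed.

Lemma upd_neq x i v j : j != i -> upd x i v j = x j.
Proof. move=> h; rewrite /upd; case: eqP => // e; by rewrite e eqxx in h. Qed.

Lemma upd_id x i : upd x i (x i) = x.
Proof.
apply: functional_extensionality_dep => j; case: (eqVneq j i) => [->|h].
  exact: upd_eq.
exact: upd_neq.
Qed.

Lemma upd_upd x i v w : upd (upd x i v) i w = upd x i w.
Proof.
apply: functional_extensionality_dep => j; case: (eqVneq j i) => [->|h].
  by rewrite !upd_eq.
by rewrite !upd_neq.
Qed.

Definition same (a b : prodX L) := forall j, A j a <-> A j b.

Lemma same_refl a : same a a. Proof. by []. Qed.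
Lemma same_sym a b : same a b -> same b a.
Proof. by move=> h j; split => /(h j). Qed.
Lemma same_trans a b c : same a b -> same b c -> same a c.
Proof. by move=> h h' j; split => [/(h j)/(h' j)|/(h' j)/(h j)]. Qed.

Let hopen : forall j, prod_open (A j) := fun j => (hA.1 j).1.
Let hdisj := hA.2.2.1.
Let hcover := hA.2.2.2.

Lemma same_in j0 a b : A j0 a -> A j0 b -> same a b.
Proof.
move=> ha hb j; case: (eqVneq j j0) => [->|hne] //.
move/eqP: hne => hne; split => h; exfalso.
  exact: hdisj hne h ha.
exact: hdisj hne h hb.
Qed.

Definition Dset (i : 'I_n) (c : L i) :=
  exists u, imm c u /\ exists y : prodX L, ~ same (upd y i c) (upd y i u).

Lemma walk (i : 'I_n) (x : prodX L) (v : L i) : wo_le (x i) v ->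
  (forall c, wo_le (x i) c -> wo_lt c v -> ~ Dset c) -> same x (upd x i v).
Proof.
move: v; apply: (well_founded_ind (@wo_lt_wf (L i))) => v IH hxv hD.
case: hxv => [hlt | <-]; last by rewrite upd_id; exact: same_refl.
case: (classic (exists t, imm t v)) => [[t [htv himm]] | hnimm].
- have hxt : wo_le (x i) t.
    apply: not_lt_le => htx; apply: (himm (x i)); by split.
  have h1 := IH t htv hxt (fun c h1 h2 => hD c h1 (lt_trans h2 htv)).
  have h2 : same (upd x i t) (upd x i v).
    apply: NNPP => hns; apply: (hD t hxt htv).
    exists v; split; first by split.
    by exists x.
  exact: same_trans h1 h2.
- have [j0 hj0] := hcover (upd x i v).
  have [l [u [hin hbox]]] := hopen hj0.
  have hli := (hin i).1; rewrite upd_eq in hli.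
  have [m [h1 [h2 h3]]] : exists m, wo_le (x i) m /\ wo_lt m v /\
      (match l i with None => True | Some a => wo_le a m end).
    case: (l i) hli => [a|] /= ha; last by exists (x i); split; [exact: le_refl|].
    case: (wo_lt_total a (x i)) => [h|[h|h]].
    + by exists (x i); split; [exact: le_refl|split => //; left].
    + by exists (x i); split; [exact: le_refl|split => //; right].
    + by exists a; split; [left|split => //; exact: le_refl].
  have [t [hmt htv]] : exists t, wo_lt m t /\ wo_lt t v.
    apply: NNPP => h; apply: hnimm; exists m; split => // w [hw1 hw2].
    by apply: h; exists w.
  have hxt : wo_lt (x i) t := le_lt_trans h1 hmt.
  have hp : A j0 (upd x i t).
    apply: hbox => i'; case: (eqVneq i' i) => [->|hne].
    + rewrite upd_eq; have := hin i; rewrite upd_eq => -[_ hu]; split.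
      * case: (l i) h3 => //= a ha; exact: le_lt_trans ha hmt.
      * case: (u i) hu => //= b hb; exact: lt_trans htv hb.
    + rewrite upd_neq //; have := hin i'; by rewrite upd_neq.
  apply: same_trans (IH t htv (or_introl hxt) (fun c h1 h2 => hD c h1 (lt_trans h2 htv)))
    (same_in hp hj0).
Qed.

Lemma prod_conv (P : nat -> prodX L) :
  exists psi, sincr psi /\ forall i, exists z : L i, conv (fun m => P (psi m) i) z.
Proof.
suff: forall c, exists psi, sincr psi /\
    forall i : 'I_n, i < c -> exists z : L i, conv (fun m => P (psi m) i) z.
  move/(_ n) => [psi [hpsi h]]; exists psi; split => // i; exact: h i (ltn_ord i).
elim => [|c [psi [hpsi IH]]].
  by exists id; split => // i; rewrite ltn0.
case: (ltnP c n) => hc; last first.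
  exists psi; split => // i hi; apply: IH; exact: leq_trans (ltn_ord i) hc.
pose i0 := Ordinal hc.
have [phi [hphi [z hz]]] := seq_conv (@hcf i0) (fun m => P (psi m) i0).
exists (fun m => psi (phi m)); split; first exact: sincr_comp.
move=> i; rewrite ltnS leq_eqVlt => /orP [/eqP hi | hi].
- have e : i = i0 by apply: val_inj.
  subst i; by exists z.
- have [z' hz'] := IH i hi; exists z'; exact: conv_sub hz' hphi.
Qed.

Lemma D_finite i : exists s : list (L i), forall c, Dset c -> List.In c s.
Proof.
apply: NNPP => hnf.
have hh : forall s : list (L i), exists c, Dset c /\ ~ List.In c s.
  move=> s; apply: NNPP => h; apply: hnf; exists s => c hc; apply: NNPP => hn.
  by apply: h; exists c.
have [h hhp] := choice_nd hh.
pose pre := fix pre m := if m is m'.+1 then h (pre m') :: pre m' else nil.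
pose t m := h (pre m).
have tin : forall m m', m' < m -> List.In (t m') (pre m).
  elim => // m IHm m'; rewrite ltnS leq_eqVlt => /orP [/eqP -> | hm].
    by left.
  right; exact: IHm.
have tinj : forall m m', t m = t m' -> m = m'.
  move=> m m' e; case: (ltngtP m m') => // hm; exfalso.
  - have := tin _ _ hm; rewrite e; exact: (hhp (pre m')).2.
  - have := tin _ _ hm; rewrite -e; exact: (hhp (pre m)).2.
have hDt : forall m, Dset (t m) := fun m => (hhp (pre m)).1.
have [Uf hUf] := choice_nd hDt.
have [Y hY] := choice_nd (fun m => (hUf m).2).
have [phi0 [hphi0 hnd]] := mono_sub t.
have Tlt : forall m m', m < m' -> wo_lt (t (phi0 m)) (t (phi0 m')).
  move=> m m' hm; case: (ndecr_le hnd (ltnW hm)) => // /tinj e.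
  by have := sincr_lt hphi0 hm; rewrite e ltnn.
pose P m := upd (Y (phi0 m)) i (t (phi0 m)).
have [psi [hpsi hz]] := prod_conv P.
have [z hzc] := choice_dep hz.
have [j0 hj0] := hcover z.
have [l [u [hin hbox]]] := hopen hj0.
have hM : forall i', exists M, forall m, M <= m -> in_interval (l i') (u i') (P (psi m) i').
  move=> i'; exact: hzc i' (l i') (u i') (hin i').
have [Mf hMf] := choice_nd hM.
pose M := \max_(i' : 'I_n) Mf i'.
have hMi : forall i', Mf i' <= M by move=> i'; exact: leq_bigmax.
set kk := phi0 (psi M).
set kk' := phi0 (psi M.+1).
have ha : A j0 (P (psi M)) by apply: hbox => i'; apply: hMf; exact: hMi.
have hb : A j0 (upd (Y kk) i (Uf kk)).
  apply: hbox => i'; case: (eqVneq i' i) => [->|hne].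
  - rewrite upd_eq.
    have := hMf i M (hMi i); rewrite /P upd_eq => -[hl1 _].
    have := hMf i M.+1 (leq_trans (hMi i) (leqnSn M)); rewrite /P upd_eq => -[_ hu2].
    have [himm1 himm2] := (hUf kk).1.
    have hlt : wo_lt (t kk) (t kk') := Tlt _ _ (sincr_lt hpsi (ltnSn M)).
    have hUle : wo_le (Uf kk) (t kk') := not_lt_le (fun h => himm2 (t kk') (conj hlt h)).
    split.
    + case: (l i) hl1 => //= a ha'; exact: lt_trans ha' himm1.
    + case: (u i) hu2 => //= b hb; exact: le_lt_trans hUle hb.
  - rewrite upd_neq //; have := hMf i' M (hMi i'); by rewrite /P upd_neq.
apply: (hY kk); exact: same_in ha hb.
Qed.

Lemma main_thm : exists F : forall i : 'I_n, list (L i), grid_refines F A.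
Proof.
have [F hF] := choice_dep D_finite.
exists F => U hU [x0 hx0].
have [j hj] := hcover x0.
exists j => x hx.
have coord : forall i (y : prodX L) (v : L i), U i (y i) -> U i v -> same y (upd y i v).
  move=> i y v hy hv; case: (wo_lt_total (y i) v) => [hle|[heq|hlt]].
  - apply: walk; first by left.
    move=> c h1 h2 hDc; exact: grid_lemma (hU i) hy hv c h1 h2 (hF i c hDc).
  - rewrite -heq upd_id; exact: same_refl.
  - have hw := @walk i (upd y i v) (y i).
    rewrite upd_upd upd_id upd_eq in hw.
    apply: same_sym; apply: hw; first by left.
    move=> c h1 h2 hDc; exact: grid_lemma (hU i) hv hy c h1 h2 (hF i c hDc).
pose mix c : prodX L := fun i => if i < c then x i else x0 i.
have key : forall c, c <= n -> same x0 (mix c).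
  elim => [|c IH] hc.
    have -> : mix 0 = x0 by apply: functional_extensionality_dep.
    exact: same_refl.
  pose i0 := Ordinal hc.
  have e : mix c.+1 = upd (mix c) i0 (x i0).
    apply: functional_extensionality_dep => j1; case: (eqVneq j1 i0) => [->|hne].
      by rewrite upd_eq /mix /= ltnSn.
    rewrite upd_neq // /mix ltnS leq_eqVlt.
    have : (val j1 == c) = false by apply/negbTE; exact: hne.
    by move=> ->.
  rewrite e; apply: same_trans (IH (ltnW hc)) _; apply: coord.
  - by rewrite /mix /= ltnn.
  - exact: hx.
have := key n (leqnn n).
have -> : mix n = x by apply: functional_extensionality_dep => i; rewrite /mix ltn_ord.
by move=> h; apply/(h j).
Qed.

End Main.

Theorem theorem5p8 (n : nat) (L : 'I_n -> ordinal_wo)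
    (hcf : forall i, ~ cf_omega (L i))
    (k : nat) (A : 'I_k -> (prodX L -> Prop))
    (hA : clopen_partition A) :
  exists F : forall i : 'I_n, list (L i), grid_refines F A.
Proof. exact: (@main_thm n L hcf k A hA). Qed.
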